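(* For every integer $t\ge 0$, $F_{3t+2,\,2t+2}=1$ and $F_{5t+4,\,2t+2}=1$.
   Context: Define maps $G,S:\mathbb Z^2\to\mathbb Z^2$ by $G(x,y)=(x+y,y)$ and $S(x,y)=(3x-2y+1,\,2x-y+1)$. Define the array $(F_{n,k})_{n,k\ge 0}$ by $F_{0,0}=1$ and, for $(n,k)\neq(0,0)$, $F_{n,k}$ is the number of finite words $w=w_1w_2\cdots w_m$ ($m\ge 0$) over the alphabet $\{G,S\}$ with $w_1\circ w_2\circ\cdots\circ w_m(1,1)=(n,k)$ (the empty word acts as the identity). Equivalently: start with all entries $0$, set $F_{0,0}=1$ and $F_{1,1}=1$, and thereafter, whenever an entry $F_{n,k}$ with $n\ge 1$ changes its value, increase $F_{n+k,k}$ and $F_{3n+1-2k,\,2n+1-k}$ by $1$. *)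

(* Defs.v *)
From Stdlib Require Import ZArith List Bool.
Import ListNotations.
Open Scope Z_scope.

Definition Gmap (p : Z * Z) : Z * Z := (fst p + snd p, snd p).
Definition Smap (p : Z * Z) : Z * Z :=
  (3 * fst p - 2 * snd p + 1, 2 * fst p - snd p + 1).

Inductive letter : Type := LG | LS.

Definition act (a : letter) : Z * Z -> Z * Z :=
  match a with LG => Gmap | LS => Smap end.

(* w_1 o w_2 o ... o w_m applied to (1,1): w_m is applied first.
   The empty word acts as the identity. *)
Definition eval_word (w : list letter) : Z * Z :=
  fold_right act (1, 1) w.

(* F_val n k m  <->  F_{n,k} = m, where F_{0,0} = 1 and otherwise F_{n,k}
   is the (finite) number of words w with eval_word w = (n,k): there is a
   duplicate-free list enumerating exactly these words, of length m. *)
Definition F_val (n k : Z) (m : nat) : Prop :=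
  if andb (n =? 0) (k =? 0) then m = 1%nat
  else exists s : list (list letter),
         NoDup s /\ (forall w, In w s <-> eval_word w = (n, k)) /\ length s = m.

(* Main.v *)
Require Import Defs.
From Stdlib Require Import ZArith List Lia.
Import ListNotations.
Open Scope Z_scope.

Lemma evG : forall w, eval_word (LG :: w) = Gmap (eval_word w).
Proof. reflexivity. Qed.
Lemma evS : forall w, eval_word (LS :: w) = Smap (eval_word w).
Proof. reflexivity. Qed.
Lemma Geq : forall x y, Gmap (x, y) = (x + y, y).
Proof. reflexivity. Qed.
Lemma Seq : forall x y, Smap (x, y) = (3 * x - 2 * y + 1, 2 * x - y + 1).
Proof. reflexivity. Qed.

Lemma peq : forall a b c d : Z, (a, b) = (c, d) -> a = c /\ b = d.
Proof. intros a b c d H. inversion H. split; reflexivity. Qed.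

Lemma inv_ok : forall w a b, eval_word w = (a, b) -> 1 <= b /\ b <= a.
Proof.
  induction w as [|c w IH]; intros a b H.
  - apply peq in H; lia.
  - destruct (eval_word w) as [x y] eqn:E.
    specialize (IH x y eq_refl).
    destruct c; [rewrite evG, E, Geq in H | rewrite evS, E, Seq in H];
      apply peq in H; destruct H as [H1 H2]; lia.
Qed.

Lemma evalG : forall t : nat, eval_word (repeat LG t) = (Z.of_nat t + 1, 1).
Proof.
  induction t as [|t IH]; simpl.
  - reflexivity.
  - rewrite IH. unfold Gmap; cbn [fst snd]. f_equal. lia.
Qed.

Lemma uniqG : forall w (t : nat), eval_word w = (Z.of_nat t + 1, 1) -> w = repeat LG t.
Proof.
  induction w as [|c w IH]; intros t H.
  - inversion H. destruct t; [reflexivity| lia].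
  - destruct (eval_word w) as [x y] eqn:E.
    pose proof (inv_ok w x y E) as Hi.
    destruct c; [rewrite evG, E, Geq in H | rewrite evS, E, Seq in H];
      apply peq in H; destruct H as [H1 H2]; subst.
    + destruct t as [|t]; [lia|].
      simpl. f_equal. apply IH. f_equal. lia.
    + lia.
Qed.

Lemma uniq1 : forall w (t : nat),
  eval_word w = (3 * Z.of_nat t + 2, 2 * Z.of_nat t + 2) -> w = LS :: repeat LG t.
Proof.
  intros [|c w] t H.
  - apply peq in H; lia.
  - destruct (eval_word w) as [x y] eqn:E.
    pose proof (inv_ok w x y E) as Hi.
    destruct c; [rewrite evG, E, Geq in H | rewrite evS, E, Seq in H];
      apply peq in H; destruct H as [H1 H2].
    + lia.
    + f_equal. apply uniqG. rewrite E. f_equal; lia.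
Qed.

Lemma eval1 : forall t : nat,
  eval_word (LS :: repeat LG t) = (3 * Z.of_nat t + 2, 2 * Z.of_nat t + 2).
Proof.
  intros t. rewrite evS, evalG, Seq. f_equal; lia.
Qed.

Lemma uniq2 : forall w (t : nat),
  eval_word w = (5 * Z.of_nat t + 4, 2 * Z.of_nat t + 2) -> w = LG :: LS :: repeat LG t.
Proof.
  intros [|c w] t H.
  - apply peq in H; lia.
  - destruct (eval_word w) as [x y] eqn:E.
    pose proof (inv_ok w x y E) as Hi.
    destruct c; [rewrite evG, E, Geq in H | rewrite evS, E, Seq in H];
      apply peq in H; destruct H as [H1 H2].
    + f_equal. apply uniq1. rewrite E. f_equal; lia.
    + lia.
Qed.

Lemma eval2 : forall t : nat,
  eval_word (LG :: LS :: repeat LG t) = (5 * Z.of_nat t + 4, 2 * Z.of_nat t + 2).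
Proof.
  intros t. change (eval_word (LG :: LS :: repeat LG t)) with
    (Gmap (eval_word (LS :: repeat LG t))).
  rewrite eval1. unfold Gmap; cbn [fst snd]. f_equal; lia.
Qed.

Lemma single : forall n k w0, k <> 0 ->
  eval_word w0 = (n, k) ->
  (forall w, eval_word w = (n, k) -> w = w0) -> F_val n k 1.
Proof.
  intros n k w0 Hk He Hu. unfold F_val.
  assert (Hb : (k =? 0) = false) by (apply Z.eqb_neq; exact Hk).
  rewrite Hb, Bool.andb_false_r.
  exists [w0]. split; [constructor; [simpl; tauto | constructor]|].
  split; [|reflexivity].
  intros w; simpl; split.
  - intros [<-|[]]; exact He.
  - intros H; left; symmetry; apply Hu; exact H.
Qed.

Theorem corollary15 : forall t : nat,
  F_val (3 * Z.of_nat t + 2) (2 * Z.of_nat t + 2) 1 /\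
  F_val (5 * Z.of_nat t + 4) (2 * Z.of_nat t + 2) 1.
Proof.
  intros t. split.
  - apply (single _ _ (LS :: repeat LG t)); [lia | apply eval1 | intros w H; apply uniq1; exact H].
  - apply (single _ _ (LG :: LS :: repeat LG t)); [lia | apply eval2 | intros w H; apply uniq2; exact H].
Qed.
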